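(* Let $(Q,\cdot)$ be a quadratical quasigroup, $a,b\in Q$ distinct, and $t$ a positive integer. Then $t1,t3,t4,t2$ are four distinct elements and $t1\cdot t3=t3\cdot t4=t4\cdot t2=t2\cdot t1=aba$; that is, $(t1,t3,t4,t2)$ is a $4$-cycle based on $aba$.
   Context: A quadratical quasigroup is a quasigroup satisfying $xy\cdot x=zx\cdot yz$ (equivalently, a groupoid satisfying $x\cdot x=x$, $yx\cdot xy=x$, $xy\cdot zw=xz\cdot yw$). $aba$ denotes $ab\cdot a$. The elements $tk$ are defined by $11=a$, $12=ab$, $13=ba$, $14=b$ and, for $n\ge2$, $n1=(n-1)1\cdot(n-1)2$, $n2=(n-1)2\cdot(n-1)4$, $n3=(n-1)3\cdot(n-1)1$, $n4=(n-1)4\cdot(n-1)3$. An ($n$-)cycle based on $c$ is a sequence $x_1,\dots,x_n$ of distinct elements with $x_1x_2=x_2x_3=\dots=x_{n-1}x_n=x_nx_1=c$. *)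

(* Defs.v *)
From Stdlib Require Import Arith List.
Import ListNotations.

Definition quasigroup {Q : Type} (op : Q -> Q -> Q) : Prop :=
  (forall a b : Q, exists x : Q, op a x = b /\ forall x', op a x' = b -> x' = x) /\
  (forall a b : Q, exists y : Q, op y a = b /\ forall y', op y' a = b -> y' = y).

Definition quadratical {Q : Type} (op : Q -> Q -> Q) : Prop :=
  quasigroup op /\
  forall x y z : Q, op (op x y) x = op (op z x) (op y z).

(* The quadruple (t1, t2, t3, t4) for t = n+1:
   11 = a, 12 = ab, 13 = ba, 14 = b, and
   n1 = (n-1)1.(n-1)2, n2 = (n-1)2.(n-1)4,
   n3 = (n-1)3.(n-1)1, n4 = (n-1)4.(n-1)3. *)
Fixpoint tq {Q : Type} (op : Q -> Q -> Q) (a b : Q) (n : nat) : Q * Q * Q * Q :=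
  match n with
  | O => (a, op a b, op b a, b)
  | S m =>
      let '(x1, x2, x3, x4) := tq op a b m in
      (op x1 x2, op x2 x4, op x3 x1, op x4 x3)
  end.

Definition tk {Q : Type} (op : Q -> Q -> Q) (a b : Q) (t k : nat) : Q :=
  let '(x1, x2, x3, x4) := tq op a b (t - 1) in
  match k with
  | 1 => x1 | 2 => x2 | 3 => x3 | _ => x4
  end.

Fixpoint chain_based {Q : Type} (op : Q -> Q -> Q) (c : Q) (l : list Q) : Prop :=
  match l with
  | x :: ((y :: _) as r) => op x y = c /\ chain_based op c r
  | _ => True
  end.

Definition cycle_based {Q : Type} (op : Q -> Q -> Q) (c : Q) (l : list Q) : Prop :=
  match l with
  | nil => False
  | x :: _ =>
      List.NoDup l /\ chain_based op c l /\ op (List.last l x) x = c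
  end.

(* Main.v *)
Require Import Defs.
From Stdlib Require Import Arith List Lia.

Section S.
Variables (Q : Type) (op : Q -> Q -> Q).
Hypothesis Hq : quadratical op.

Lemma lcan a u v : op a u = op a v -> u = v.
Proof.
  intro H. destruct Hq as [[Hl _] _]. destruct (Hl a (op a u)) as [x [_ Hx]].
  rewrite (Hx u eq_refl), (Hx v (eq_sym H)). reflexivity.
Qed.

Lemma rcan a u v : op u a = op v a -> u = v.
Proof.
  intro H. destruct Hq as [[_ Hr] _]. destruct (Hr a (op u a)) as [x [_ Hx]].
  rewrite (Hx u eq_refl), (Hx v (eq_sym H)). reflexivity.
Qed.

Lemma HA x y z : op (op x y) x = op (op z x) (op y z).
Proof. destruct Hq as [_ H]. apply H. Qed.

Lemma idem x : op x x = x.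
Proof.
  pose proof (HA x x x) as H. symmetry. apply (lcan (op x x)). exact H.
Qed.

Lemma HB x z : op (op z x) (op x z) = x.
Proof. rewrite <- HA, !idem. reflexivity. Qed.

Lemma E2 x y : op (op x y) x = op (op y x) y.
Proof. rewrite (HA x y y), idem. reflexivity. Qed.

Lemma HC x y z : op (op x y) (op z x) = op (op x z) (op y x).
Proof. rewrite <- (HA y z x), <- (HA z y x). apply E2. Qed.

Lemma comm_eq x y : op x y = op y x -> x = y.
Proof.
  intro H. pose proof (HB x y) as H1. pose proof (HB y x) as H2.
  rewrite H in H1. congruence.
Qed.

Lemma collapse_adj c v1 v2 v3 v4 :
  op v1 v2 = c -> op v2 v3 = c -> op v3 v4 = c -> op v4 v1 = c ->
  v1 = v2 -> v1 = c /\ v2 = c /\ v3 = c /\ v4 = c.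
Proof.
  intros H1 H2 H3 H4 E. subst v2. rewrite idem in H1. subst v1.
  assert (v3 = c). { apply (lcan c). rewrite idem. exact H2. }
  subst v3. assert (v4 = c). { apply (lcan c). rewrite idem. exact H3. }
  subst; auto.
Qed.

Lemma collapse c v1 v2 v3 v4 :
  op v1 v2 = c -> op v2 v3 = c -> op v3 v4 = c -> op v4 v1 = c ->
  (v1 = v2 \/ v2 = v3 \/ v3 = v4 \/ v4 = v1 \/ v1 = v3 \/ v2 = v4) ->
  v1 = c /\ v2 = c /\ v3 = c /\ v4 = c.
Proof.
  intros H1 H2 H3 H4 [E|[E|[E|[E|[E|E]]]]].
  - eapply collapse_adj; eauto.
  - destruct (collapse_adj c v2 v3 v4 v1) as (?&?&?&?); auto 6.
  - destruct (collapse_adj c v3 v4 v1 v2) as (?&?&?&?); auto 6.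
  - destruct (collapse_adj c v4 v1 v2 v3) as (?&?&?&?); auto 6.
  - subst v3. apply collapse_adj with (v3 := v1) (v4 := v4); auto.
    apply comm_eq. congruence.
  - subst v4. apply collapse_adj with (v3 := v3) (v4 := v2); auto.
    apply comm_eq. congruence.
Qed.

Lemma cyc a b n : let c := op (op a b) a in
  let '(x1, x2, x3, x4) := tq op a b n in
  op x1 x3 = c /\ op x3 x4 = c /\ op x4 x2 = c /\ op x2 x1 = c.
Proof.
  intro c. induction n as [|n IH]; simpl.
  - subst c. repeat split.
    + symmetry. rewrite (HA a b a), idem. reflexivity.
    + symmetry. apply E2.
    + rewrite (E2 a b). rewrite (HA b a b), idem. reflexivity.
  - destruct (tq op a b n) as [[[x1 x2] x3] x4].
    destruct IH as (H1&H2&H3&H4). repeat split.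
    + rewrite HC, H1, H4, idem. reflexivity.
    + rewrite HC, H2, H1, idem. reflexivity.
    + rewrite HC, H3, H2, idem. reflexivity.
    + rewrite HC, H4, H3, idem. reflexivity.
Qed.

Lemma nocollapse a b n : a <> b -> let c := op (op a b) a in
  let '(x1, x2, x3, x4) := tq op a b n in
  ~ (x1 = c /\ x2 = c /\ x3 = c /\ x4 = c).
Proof.
  intros Hab c. induction n as [|n IH]; simpl.
  - intros (?&?&?&?). congruence.
  - pose proof (cyc a b n) as Hc. simpl in Hc.
    destruct (tq op a b n) as [[[x1 x2] x3] x4].
    destruct Hc as (H1&H2&H3&H4). cbn. intros (E1&E2&E3&E4). apply IH.
    unfold c in *. assert (x1 = x2) by (apply comm_eq; congruence).
    destruct (collapse _ x1 x3 x4 x2 H1 H2 H3 H4) as (?&?&?&?); [right; right; right; left; congruence | auto].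
Qed.
End S.

Theorem proposition3p11 (Q : Type) (op : Q -> Q -> Q) (a b : Q) (t : nat) :
  quadratical op -> a <> b -> 1 <= t ->
  let t1 := tk op a b t 1 in
  let t2 := tk op a b t 2 in
  let t3 := tk op a b t 3 in
  let t4 := tk op a b t 4 in
  let aba := op (op a b) a in
  (t1 <> t3 /\ t1 <> t4 /\ t1 <> t2 /\ t3 <> t4 /\ t3 <> t2 /\ t4 <> t2) /\
  (op t1 t3 = aba /\ op t3 t4 = aba /\ op t4 t2 = aba /\ op t2 t1 = aba) /\
  cycle_based op aba (t1 :: t3 :: t4 :: t2 :: nil).
Proof.
  intros Hq Hab Ht. destruct t as [|n]; [lia|].
  unfold tk. replace (S n - 1) with n by lia.
  pose proof (cyc Q op Hq a b n) as Hc. pose proof (nocollapse Q op Hq a b n Hab) as Hn.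
  simpl in Hc, Hn |- *.
  destruct (tq op a b n) as [[[x1 x2] x3] x4].
  destruct Hc as (H1&H2&H3&H4).
  assert (D : forall P, (x1 = x3 \/ x3 = x4 \/ x4 = x2 \/ x2 = x1 \/ x1 = x4 \/ x3 = x2) -> P).
  { intros P Hp. exfalso. apply Hn.
    destruct (collapse Q op Hq _ x1 x3 x4 x2 H1 H2 H3 H4 Hp) as (?&?&?&?). auto. }
  split; [|split].
  - repeat split; intro E; apply D; auto 8.
  - auto.
  - repeat split; auto.
    + constructor. simpl; intros [E|[E|[E|[]]]]; apply D; auto 8.
      constructor. simpl; intros [E|[E|[]]]; apply D; auto 8.
      constructor. simpl; intros [E|[]]; apply D; auto 8.
      constructor. simpl; intros []. constructor.
Qed.
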